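(* Let $\theta,\theta'\in(0,1)$ with $\theta<\theta'/N$. Then the natural embedding $\iota:F_\theta\to F_{\theta'}$ (with norms $\|\cdot\|_\theta$ and $\|\cdot\|_{\theta'}$) is a nuclear operator.
   Context: $\Sigma_{\mathbf A}^+$ is the one-sided Markov shift on $N$ symbols given by an $N\times N$ zero-one aperiodic matrix $\mathbf A$. For $\theta\in(0,1)$, $d_\theta(\omega,\omega')=\theta^{\min\{m:\omega_m\ne\omega'_m\}}$, $F_\theta$ is the space of complex $d_\theta$-Lipschitz functions with norm $\|\phi\|_\theta=\|\phi\|_\infty+[\phi]_\theta$, $[\phi]_\theta$ the Lipschitz constant; $F_\theta\subset F_{\theta'}$ for $\theta<\theta'$. A bounded operator $T:E\to F$ between Banach spaces is nuclear if $Tx=\sum_n\lambda_n\langle x,x'_n\rangle y_n$ with $(\lambda_n)$ summable and $(x'_n)\subset E'$, $(y_n)\subset F$ bounded. *)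

(* Defs.v *)
From Stdlib Require Import Reals ClassicalEpsilon.
From Coquelicot Require Import Coquelicot.
Open Scope R_scope.
Open Scope C_scope.

(* Symbols are the naturals 0..N-1; a sequence is a map nat -> nat.
   The zero-one matrix A is given as a boolean relation on symbols. *)
Definition seq := nat -> nat.

Fixpoint sum_lt (N : nat) (f : nat -> nat) : nat :=
  match N with O => O | S n => (sum_lt n f + f n)%nat end.

Fixpoint mat_pow (N : nat) (A : nat -> nat -> bool) (k : nat) (i j : nat) : nat :=
  match k with
  | O => if Nat.eqb i j then 1%nat else 0%nat
  | S k' => sum_lt N (fun l => (mat_pow N A k' i l * (if A l j then 1 else 0))%nat)
  end.

Definition aperiodic (N : nat) (A : nat -> nat -> bool) : Prop :=
  exists k : nat, (1 <= k)%nat /\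
    forall i j, (i < N)%nat -> (j < N)%nat -> (0 < mat_pow N A k i j)%nat.

Definition in_sigma (N : nat) (A : nat -> nat -> bool) (w : seq) : Prop :=
  forall m, (w m < N)%nat /\ A (w m) (w (S m)) = true.

Definition first_diff (w w' : seq) : nat :=
  epsilon (inhabits 0%nat)
    (fun n => w n <> w' n /\ forall k, (k < n)%nat -> w k = w' k).

Definition dtheta (theta : R) (w w' : seq) : R :=
  if excluded_middle_informative (w = w') then 0%R else (theta ^ first_diff w w')%R.

Definition sup_norm N A (f : seq -> C) : R :=
  real (Lub_Rbar (fun r => exists w, in_sigma N A w /\ r = Cmod (f w))).

Definition lip_const N A (theta : R) (f : seq -> C) : R :=
  real (Lub_Rbar (fun r => exists w w', in_sigma N A w /\ in_sigma N A w' /\ w <> w' /\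
                    r = (Cmod (f w - f w') / dtheta theta w w')%R)).

Definition norm_theta N A (theta : R) (f : seq -> C) : R :=
  (sup_norm N A f + lip_const N A theta f)%R.

Definition in_F N A (theta : R) (f : seq -> C) : Prop :=
  (exists M : R, forall w, in_sigma N A w -> (Cmod (f w) <= M)%R) /\
  (exists L, forall w w', in_sigma N A w -> in_sigma N A w' ->
      (Cmod (f w - f w') <= L * dtheta theta w w')%R).

(* the embedding iota : F_theta -> F_theta' is nuclear:
   iota x = sum_n lam_n <x, x'_n> y_n with (lam_n) summable, (x'_n) a bounded
   sequence in the dual of F_theta and (y_n) a bounded sequence in F_theta',
   the series converging in ||.||_theta'. *)
Definition embedding_nuclear N A (theta theta' : R) : Prop :=
  exists (lam : nat -> C) (x' : nat -> (seq -> C) -> C) (y : nat -> seq -> C),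
    ex_series (fun n => Cmod (lam n)) /\
    (forall n f g, in_F N A theta f -> in_F N A theta g ->
        x' n (fun w => f w + g w) = x' n f + x' n g) /\
    (forall n (c : C) f, in_F N A theta f ->
        x' n (fun w => c * f w) = c * x' n f) /\
    (exists M, forall n f, in_F N A theta f ->
        (Cmod (x' n f) <= M * norm_theta N A theta f)%R) /\
    (forall n, in_F N A theta' (y n)) /\
    (exists K, forall n, (norm_theta N A theta' (y n) <= K)%R) /\
    (forall f, in_F N A theta f ->
       is_lim_seq (fun k => norm_theta N A theta'
                     (fun w => f w - sum_n (fun n => lam n * x' n f * y n w) k)) 0).

(* Main.v *)
Require Import Defs.
From Stdlib Require Import Reals Lia Lra ClassicalEpsilon FunctionalExtensionality.
From Coquelicot Require Import Coquelicot.
Open Scope R_scope.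

Fixpoint code (N : nat) (n : nat) (w : seq) : nat :=
  match n with O => O | S n' => (code N n' w + w n' * N ^ n')%nat end.

Lemma code_lt N n w : (forall i, (i < n)%nat -> (w i < N)%nat) -> (code N n w < N ^ n)%nat.
Proof.
  induction n; simpl; intros H. lia.
  assert (h1 := IHn (fun i Hi => H i ltac:(lia))). assert (h2 := H n ltac:(lia)).
  assert (w n * N ^ n <= (N-1) * N^n)%nat by (apply Nat.mul_le_mono_r; lia).
  destruct N. lia. replace (S N - 1)%nat with N in H0 by lia. nia.
Qed.

Lemma code_agree N n w w' : (forall i, (i < n)%nat -> w i = w' i) -> code N n w = code N n w'.
Proof.
  induction n; simpl; intros H. auto.
  rewrite IHn by (intros; apply H; lia). rewrite H by lia. auto.
Qed.

Lemma code_mod N n w : (N <> 0)%nat -> (forall i, (i < S n)%nat -> (w i < N)%nat) ->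
  Nat.modulo (code N (S n) w) (N ^ n) = code N n w.
Proof.
  intros HN H. simpl. rewrite Nat.Div0.mod_add. apply Nat.mod_small. apply code_lt.
  intros; apply H; lia.
Qed.

Lemma code_inj N n a b : (forall i, (i < n)%nat -> (a i < N)%nat) ->
  (forall i, (i < n)%nat -> (b i < N)%nat) -> code N n a = code N n b ->
  forall i, (i < n)%nat -> a i = b i.
Proof.
  induction n; intros Ha Hb E i Hi. lia.
  assert (HN : N <> 0%nat) by (specialize (Ha 0%nat ltac:(lia)); lia).
  assert (E' : code N n a = code N n b).
  { rewrite <- (code_mod N n a), <- (code_mod N n b); auto; rewrite E; auto. }
  destruct (Nat.eq_dec i n) as [->|].
  - simpl in E. rewrite E' in E.
    assert (Hm : (a n * N ^ n = b n * N ^ n)%nat) by lia.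
    apply Nat.mul_cancel_r in Hm; [auto| apply Nat.pow_nonzero; auto].
  - apply IHn; [intros; apply Ha; lia|intros; apply Hb; lia|auto|lia].
Qed.

Fixpoint Sblk (N n j : nat) : nat :=
  match j with O => O | S j' => (N ^ n + Sblk N (S n) j')%nat end.
Definition T N n := Sblk N 0 n.

Lemma Sblk_S N n j : Sblk N n (S j) = (Sblk N n j + N ^ (n + j))%nat.
Proof.
  revert n; induction j; intros n. simpl. rewrite !Nat.add_0_r. reflexivity.
  change (N^n + Sblk N (S n) (S j) = (N^n + Sblk N (S n) j) + N^(n + S j))%nat. rewrite IHj. replace (S n + j)%nat with (n + S j)%nat by lia. lia.
Qed.

Lemma T_S N n : T N (S n) = (T N n + N ^ n)%nat.
Proof. unfold T. rewrite Sblk_S. auto. Qed.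

Fixpoint dec_aux (N fuel n m : nat) : nat * nat :=
  match fuel with O => (n, m)
  | S f => if Nat.ltb m (N ^ n) then (n, m) else dec_aux N f (S n) (m - N ^ n) end.
Definition dec N m := dec_aux N (S m) 0 m.

Lemma dec_aux_spec N j : (N <> 0)%nat -> forall n fuel c, (c < N ^ (n + j))%nat -> (j < fuel)%nat ->
  dec_aux N fuel n (Sblk N n j + c) = ((n + j)%nat, c).
Proof.
  intros HN; induction j; intros n fuel c Hc Hf; destruct fuel; try lia; simpl.
  - rewrite Nat.add_0_r in *. destruct (Nat.ltb_spec c (N^n)); [f_equal; lia| lia].
  - destruct (Nat.ltb_spec (N ^ n + Sblk N (S n) j + c) (N ^ n)). lia.
    replace (N ^ n + Sblk N (S n) j + c - N ^ n)%nat with (Sblk N (S n) j + c)%nat by lia.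
    rewrite IHj. f_equal; lia. replace (S n + j)%nat with (n + S j)%nat by lia. auto. lia.
Qed.

Lemma T_ge N n : (N <> 0)%nat -> (n <= T N n)%nat.
Proof. intros HN; induction n. unfold T; simpl; lia. rewrite T_S.
  assert (N ^ n <> 0)%nat by (apply Nat.pow_nonzero; auto). lia. Qed.

Lemma T_mono N n m : (n <= m)%nat -> (T N n <= T N m)%nat.
Proof. induction 1. lia. rewrite T_S. lia. Qed.

Lemma dec_spec N n c : (N <> 0)%nat -> (c < N ^ n)%nat -> dec N (T N n + c) = (n, c).
Proof.
  intros HN Hc. unfold dec, T. apply dec_aux_spec; auto.
  pose proof (T_ge N n HN). unfold T in H. lia.
Qed.

Lemma dec_exists N m : (N <> 0)%nat -> exists n c, (c < N ^ n)%nat /\ m = (T N n + c)%nat.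
Proof.
  intros HN. induction m. exists 0%nat, 0%nat. simpl. unfold T; simpl; lia.
  destruct IHm as [n [c [Hc ->]]].
  destruct (Nat.eq_dec (S c) (N ^ n)).
  - exists (S n), 0%nat. split. assert (N ^ S n <> 0)%nat by (apply Nat.pow_nonzero; auto). lia.
    rewrite T_S. lia.
  - exists n, (S c). lia.
Qed.

Lemma lub_nonneg (E : R -> Prop) : (forall r, E r -> 0 <= r) -> 0 <= real (Lub_Rbar E).
Proof.
  intros H. destruct (Lub_Rbar_correct E) as [Hub Hl].
  destruct (Lub_Rbar E) eqn:Hq; simpl; try lra.
  destruct (classic (exists r, E r)) as [[r0 Hr]|Hn].
  - specialize (Hub r0 Hr). simpl in Hub. specialize (H r0 Hr). lra.
  - exfalso. assert (Hb : is_ub_Rbar E (Finite (r - 1))).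
    { intros x Hx. exfalso; apply Hn; eauto. }
    specialize (Hl _ Hb). simpl in Hl. lra.
Qed.

Lemma lub_le (E : R -> Prop) B : 0 <= B -> (forall r, E r -> r <= B) -> real (Lub_Rbar E) <= B.
Proof.
  intros HB H. destruct (Lub_Rbar_correct E) as [Hub Hl].
  assert (Hb : is_ub_Rbar E (Finite B)) by (intros x Hx; simpl; auto).
  specialize (Hl _ Hb). destruct (Lub_Rbar E); simpl in *; lra.
Qed.

Lemma lub_ge (E : R -> Prop) B r : (forall r, E r -> r <= B) -> E r -> r <= real (Lub_Rbar E).
Proof.
  intros H Hr. destruct (Lub_Rbar_correct E) as [Hub Hl].
  assert (Hb : is_ub_Rbar E (Finite B)) by (intros x Hx; simpl; auto).
  specialize (Hl _ Hb). specialize (Hub r Hr). destruct (Lub_Rbar E); simpl in *; lra.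
Qed.

Lemma pow_le_decr x a b : 0 < x <= 1 -> (a <= b)%nat -> x ^ b <= x ^ a.
Proof. intros Hx H. induction H. lra. simpl. assert (0 <= x ^ m) by (apply pow_le; lra).
  nra. Qed.

Lemma first_diff_spec (w w' : seq) : w <> w' ->
  w (first_diff w w') <> w' (first_diff w w') /\
  forall k, (k < first_diff w w')%nat -> w k = w' k.
Proof.
  intros Hne. unfold first_diff. apply epsilon_spec.
  assert (Hex : exists n, w n <> w' n).
  { apply NNPP; intros Hn. apply Hne. apply functional_extensionality. intros x.
    destruct (Nat.eq_dec (w x) (w' x)); auto. exfalso; apply Hn; eauto. }
  destruct Hex as [n Hn].
  induction n as [n IH] using (well_founded_induction Nat.lt_wf_0).
  destruct (classic (forall k, (k < n)%nat -> w k = w' k)) as [Hall|Hno].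
  - eauto.
  - apply not_all_ex_not in Hno. destruct Hno as [k Hk].
    apply imply_to_and in Hk. destruct Hk as [Hk1 Hk2]. apply (IH k); auto.
Qed.

Lemma fd_ge (w w' : seq) j : w <> w' -> (forall i, (i < j)%nat -> w i = w' i) ->
  (j <= first_diff w w')%nat.
Proof.
  intros Hne H. destruct (first_diff_spec w w' Hne) as [H1 _].
  destruct (Nat.le_gt_cases j (first_diff w w')); auto. exfalso. apply H1; apply H; auto.
Qed.

Lemma dtheta_ne th w w' : w <> w' -> dtheta th w w' = th ^ first_diff w w'.
Proof. intros. unfold dtheta. destruct (excluded_middle_informative (w = w')); tauto. Qed.

Lemma dtheta_eq th w : dtheta th w w = 0.
Proof. unfold dtheta. destruct (excluded_middle_informative (w = w)); tauto. Qed.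

Lemma dtheta_nonneg th w w' : 0 < th -> 0 <= dtheta th w w'.
Proof. intros. destruct (excluded_middle_informative (w = w')).
  subst; rewrite dtheta_eq; lra. rewrite dtheta_ne by auto. apply pow_le; lra. Qed.

Lemma dtheta_le th w w' j : 0 < th < 1 -> (forall i, (i < j)%nat -> w i = w' i) ->
  dtheta th w w' <= th ^ j.
Proof.
  intros Hth H. destruct (excluded_middle_informative (w = w')).
  subst; rewrite dtheta_eq; apply pow_le; lra. rewrite dtheta_ne by auto.
  apply pow_le_decr; try lra. apply fd_ge; auto.
Qed.

Open Scope R_scope.

Definition xpt N A n c : seq :=
  epsilon (inhabits (fun _ : nat => 0%nat)) (fun z => in_sigma N A z /\ code N n z = c).
Definition nonempty N A n c : Prop := exists z, in_sigma N A z /\ code N n z = c.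
Definition prevf N A (f : seq -> C) n c : C :=
  match n with O => 0%C | S n' => f (xpt N A n' (Nat.modulo c (N ^ n'))) end.
Definition Dfun N A (f : seq -> C) n c : C :=
  if excluded_middle_informative (nonempty N A n c) then (f (xpt N A n c) - prevf N A f n c)%C else 0%C.

Lemma xpt_spec N A n c : nonempty N A n c -> in_sigma N A (xpt N A n c) /\ code N n (xpt N A n c) = c.
Proof. intros H. unfold xpt. apply epsilon_spec. exact H. Qed.

Lemma sig_lt N A w : in_sigma N A w -> forall i, (i < N)%nat -> True.
Proof. auto. Qed.

Lemma sig_dig N A w n : in_sigma N A w -> forall i, (i < n)%nat -> (w i < N)%nat.
Proof. intros H i _. apply H. Qed.

Lemma sig_ne N A w n : in_sigma N A w -> nonempty N A n (code N n w).
Proof. intros H. exists w; auto. Qed.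

Definition Pf N A (f : seq -> C) n w : C := f (xpt N A n (code N n w)).
Definition prevP N A f n w : C := match n with O => 0%C | S n' => Pf N A f n' w end.

Lemma Dfun_w N A f n w : (N <> 0)%nat -> in_sigma N A w ->
  Dfun N A f n (code N n w) = (Pf N A f n w - prevP N A f n w)%C.
Proof.
  intros HN Hw. unfold Dfun. destruct (excluded_middle_informative _) as [_|Hn].
  2:{ exfalso; apply Hn, sig_ne; auto. }
  unfold Pf, prevP, prevf. destruct n; auto.
  rewrite code_mod; auto. intros; apply Hw.
Qed.

Lemma xpt_agree N A n w : in_sigma N A w ->
  forall i, (i < n)%nat -> xpt N A n (code N n w) i = w i.
Proof.
  intros Hw. destruct (xpt_spec N A n (code N n w) (sig_ne N A w n Hw)) as [H1 H2].
  apply (code_inj N n); auto; intros; [apply H1|apply Hw].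
Qed.

Definition lamf N th th' m : C := RtoC ((th / th') ^ fst (dec N m)).
Definition xf N A th m (f : seq -> C) : C :=
  (Dfun N A f (fst (dec N m)) (snd (dec N m)) * RtoC (/ th ^ fst (dec N m)))%C.
Definition yf N th' m (w : seq) : C :=
  RtoC (th' ^ fst (dec N m) * (if Nat.eqb (code N (fst (dec N m)) w) (snd (dec N m)) then 1 else 0)).
Definition term N A th th' f m w : C := (lamf N th th' m * xf N A th m f * yf N th' m w)%C.

Lemma term_w N A th th' f n c w : (N <> 0)%nat -> 0 < th -> 0 < th' -> in_sigma N A w ->
  (c < N ^ n)%nat ->
  term N A th th' f (T N n + c) w =
  if Nat.eqb (code N n w) c then (Pf N A f n w - prevP N A f n w)%C else 0%C.
Proof.
  intros HN Hth Hth' Hw Hc. unfold term, lamf, xf, yf. rewrite dec_spec by auto. simpl fst; simpl snd.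
  assert (E : (th / th') ^ n * / th ^ n * (th' ^ n * 1) = 1).
  { unfold Rdiv. rewrite Rpow_mult_distr, pow_inv. field. split; apply pow_nonzero; lra. }
  destruct (Nat.eqb_spec (code N n w) c) as [<-|Hne].
  - rewrite Dfun_w by auto.
    transitivity ((Pf N A f n w - prevP N A f n w) * RtoC ((th / th') ^ n * / th ^ n * (th' ^ n * 1)))%C.
    + rewrite !RtoC_mult. ring.
    + rewrite E. ring.
  - rewrite Rmult_0_r. ring.
Qed.

Fixpoint sumb (g : nat -> C) (k : nat) : C :=
  match k with O => 0%C | S k' => (sumb g k' + g k')%C end.

Lemma sum_n_sumb (g : nat -> C) k : sum_n g k = sumb g (S k).
Proof.
  induction k. rewrite sum_O. simpl. ring.
  rewrite sum_Sn. change (Cplus (sum_n g k) (g (S k)) = sumb g (S k) + g (S k))%C.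
  rewrite IHk. reflexivity.
Qed.

Lemma sum_block N A th th' f w : (N <> 0)%nat -> 0 < th -> 0 < th' -> in_sigma N A w ->
  forall n, sumb (fun m => term N A th th' f m w) (T N n) = prevP N A f n w /\
  forall c, (c <= N ^ n)%nat ->
    sumb (fun m => term N A th th' f m w) (T N n + c) =
    (prevP N A f n w + if Nat.ltb (code N n w) c then (Pf N A f n w - prevP N A f n w) else 0)%C.
Proof.
  intros HN Hth Hth' Hw.
  assert (Hcl : forall n, (code N n w < N ^ n)%nat) by (intros; apply code_lt; intros; apply Hw).
  assert (Hin : forall n, sumb (fun m => term N A th th' f m w) (T N n) = prevP N A f n w ->
    forall c, (c <= N ^ n)%nat ->
    sumb (fun m => term N A th th' f m w) (T N n + c) =
    (prevP N A f n w + if Nat.ltb (code N n w) c then (Pf N A f n w - prevP N A f n w) else 0)%C).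
  { intros n H0 c. induction c; intros Hc.
    - rewrite Nat.add_0_r, H0. destruct (Nat.ltb_spec (code N n w) 0). lia. ring.
    - rewrite Nat.add_succ_r. simpl. rewrite IHc by lia. rewrite term_w by (auto; lia).
      destruct (Nat.ltb_spec (code N n w) c), (Nat.eqb_spec (code N n w) c),
        (Nat.ltb_spec (code N n w) (S c)); try lia; ring. }
  assert (Hb : forall n, sumb (fun m => term N A th th' f m w) (T N n) = prevP N A f n w).
  { induction n.
    - reflexivity.
    - rewrite T_S, Hin by (auto; lia). specialize (Hcl n).
      destruct (Nat.ltb_spec (code N n w) (N ^ n)); try lia. simpl. ring. }
  intros n; split; auto.
Qed.

Lemma partial_form N A th th' f k : (N <> 0)%nat -> 0 < th -> 0 < th' ->
  exists n' c, (c < N ^ S n')%nat /\ (S k < T N (S (S n')))%nat /\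
  forall w, in_sigma N A w ->
  sum_n (fun m => term N A th th' f m w) k =
  (if Nat.ltb (code N (S n') w) c then Pf N A f (S n') w else Pf N A f n' w).
Proof.
  intros HN Hth Hth'. destruct (dec_exists N (S k) HN) as [n [c [Hc Hk]]].
  destruct n as [|n'].
  { unfold T in Hk; simpl in Hk, Hc. lia. }
  exists n', c. split; auto. split. rewrite T_S. lia.
  intros w Hw. rewrite sum_n_sumb, Hk.
  destruct (sum_block N A th th' f w HN Hth Hth' Hw (S n')) as [_ H].
  rewrite H by lia. simpl prevP. destruct (Nat.ltb (code N (S n') w) c); match goal with |- @eq _ ?x ?y => change (@eq C x y) end; ring.
Qed.

Lemma approx N A th f L n w : 0 < th < 1 -> in_sigma N A w ->
  (forall w w', in_sigma N A w -> in_sigma N A w' -> Cmod (f w - f w') <= L * dtheta th w w') ->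
  0 <= L -> Cmod (f w - Pf N A f n w) <= L * th ^ n.
Proof.
  intros Hth Hw HL HL0. unfold Pf.
  destruct (xpt_spec N A n (code N n w) (sig_ne N A w n Hw)) as [H1 _].
  eapply Rle_trans. apply HL; auto. apply Rmult_le_compat_l; auto.
  apply dtheta_le; auto. intros i Hi. symmetry. apply xpt_agree; auto.
Qed.

Definition gR N A (f : seq -> C) n' c w : C :=
  (f w - (if Nat.ltb (code N (S n') w) c then Pf N A f (S n') w else Pf N A f n' w))%C.

Lemma gsup N A th f L n' c w : 0 < th < 1 -> in_sigma N A w ->
  (forall w w', in_sigma N A w -> in_sigma N A w' -> Cmod (f w - f w') <= L * dtheta th w w') ->
  0 <= L -> Cmod (gR N A f n' c w) <= L * th ^ n'.
Proof.
  intros Hth Hw HL HL0. unfold gR. destruct (Nat.ltb _ _).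
  - eapply Rle_trans. apply approx; eauto. apply Rmult_le_compat_l; auto.
    apply pow_le_decr; lia || lra.
  - apply approx; eauto.
Qed.

Lemma glip N A th th' f L n' c w w' : 0 < th -> th < th' -> th' < 1 ->
  in_sigma N A w -> in_sigma N A w' -> w <> w' ->
  (forall w w', in_sigma N A w -> in_sigma N A w' -> Cmod (f w - f w') <= L * dtheta th w w') ->
  0 <= L -> Cmod (gR N A f n' c w - gR N A f n' c w') <= 2 * L * (th / th') ^ n' * dtheta th' w w'.
Proof.
  intros Hth Htt Hth' Hw Hw' Hne HL HL0.
  rewrite (dtheta_ne th') by auto.
  destruct (first_diff_spec w w' Hne) as [_ Hag].
  set (fd := first_diff w w') in *.
  assert (Hq : 0 < th / th' < 1). { split. apply Rdiv_lt_0_compat; lra.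
    apply Rmult_lt_reg_r with th'. lra. unfold Rdiv. rewrite Rmult_assoc, Rinv_l; lra. }
  assert (Hpow : forall j, th ^ j = (th / th') ^ j * th' ^ j).
  { intros j. rewrite <- Rpow_mult_distr. f_equal. field. lra. }
  assert (Hqp : forall j, 0 <= (th/th') ^ j) by (intros; apply pow_le; lra).
  assert (Htp : forall j, 0 <= th' ^ j) by (intros; apply pow_le; lra).
  destruct (Nat.le_gt_cases (S n') fd) as [Hge|Hlt].
  - assert (E1 : code N (S n') w = code N (S n') w') by (apply code_agree; intros; apply Hag; lia).
    assert (E2 : code N n' w = code N n' w') by (apply code_agree; intros; apply Hag; lia).
    assert (E : (gR N A f n' c w - gR N A f n' c w' = f w - f w')%C).
    { unfold gR, Pf. rewrite E1, E2. ring. }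
    rewrite E. eapply Rle_trans. apply HL; auto. rewrite dtheta_ne by auto. fold fd.
    rewrite Hpow. assert ((th/th')^fd <= (th/th')^n') by (apply pow_le_decr; lia || lra).
    specialize (Htp fd). specialize (Hqp n').
    assert (H1 : (th/th')^fd * th'^fd <= (th/th')^n' * th'^fd) by (apply Rmult_le_compat_r; auto).
    assert (H2 : 0 <= (th/th')^n' * th'^fd) by (apply Rmult_le_pos; auto).
    apply Rmult_le_compat_l with (r := L) in H1; auto. nra.
  - assert (E : (gR N A f n' c w - gR N A f n' c w' = gR N A f n' c w + - gR N A f n' c w')%C) by ring.
    rewrite E. eapply Rle_trans. apply Cmod_triangle. rewrite Cmod_opp.
    pose proof (gsup N A th f L n' c w ltac:(lra) Hw HL HL0).
    pose proof (gsup N A th f L n' c w' ltac:(lra) Hw' HL HL0).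
    rewrite Hpow in *. assert (th' ^ n' <= th' ^ fd) by (apply pow_le_decr; lia || lra).
    specialize (Hqp n'). assert (0 <= L * (th/th')^n') by (apply Rmult_le_pos; auto).
    assert (H3 : L * (th/th')^n' * th'^n' <= L * (th/th')^n' * th'^fd) by (apply Rmult_le_compat_l; auto).
    nra.
Qed.

Lemma sup_nonneg N A f : 0 <= sup_norm N A f.
Proof. apply lub_nonneg. intros r [w [_ ->]]. apply Cmod_ge_0. Qed.

Lemma lip_nonneg N A th f : 0 < th -> 0 <= lip_const N A th f.
Proof. intros Hth. apply lub_nonneg. intros r [w [w' [_ [_ [Hne ->]]]]].
  rewrite dtheta_ne by auto. unfold Rdiv. apply Rmult_le_pos. apply Cmod_ge_0.
  left; apply Rinv_0_lt_compat, pow_lt; auto. Qed.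

Lemma norm_upper N A th (G : seq -> C) a b : 0 < th -> 0 <= a -> 0 <= b ->
  (forall w, in_sigma N A w -> Cmod (G w) <= a) ->
  (forall w w', in_sigma N A w -> in_sigma N A w' -> w <> w' -> Cmod (G w - G w') <= b * dtheta th w w') ->
  norm_theta N A th G <= a + b.
Proof.
  intros Hth Ha Hb H1 H2. unfold norm_theta. apply Rplus_le_compat.
  - apply lub_le; auto. intros r [w [Hw ->]]. auto.
  - apply lub_le; auto. intros r [w [w' [Hw [Hw' [Hne ->]]]]].
    rewrite dtheta_ne in * by auto. specialize (H2 w w' Hw Hw' Hne). rewrite dtheta_ne in H2 by auto.
    assert (0 < th ^ first_diff w w') by (apply pow_lt; auto).
    apply Rmult_le_reg_r with (th ^ first_diff w w'); auto. unfold Rdiv.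
    rewrite Rmult_assoc, Rinv_l; lra.
Qed.

Lemma norm_nonneg N A th G : 0 < th -> 0 <= norm_theta N A th G.
Proof. intros. unfold norm_theta. pose proof (sup_nonneg N A G). pose proof (lip_nonneg N A th G H). lra. Qed.

Lemma sup_ge N A th f w : in_F N A th f -> in_sigma N A w -> Cmod (f w) <= sup_norm N A f.
Proof.
  intros [[M HM] _] Hw. unfold sup_norm. apply (lub_ge _ M). intros r [z [Hz ->]]; auto. eauto.
Qed.

Lemma lip_ge N A th f w w' : 0 < th -> in_F N A th f -> in_sigma N A w -> in_sigma N A w' ->
  Cmod (f w - f w') <= lip_const N A th f * dtheta th w w'.
Proof.
  intros Hth [_ [L HL]] Hw Hw'. destruct (excluded_middle_informative (w = w')) as [->|Hne].
  { rewrite dtheta_eq. replace (f w' - f w')%C with (RtoC 0) by ring. rewrite Cmod_0. lra. }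
  assert (Hd : 0 < dtheta th w w') by (rewrite dtheta_ne by auto; apply pow_lt; auto).
  assert (Hr : Cmod (f w - f w') / dtheta th w w' <= lip_const N A th f).
  { unfold lip_const. apply (lub_ge _ (Rabs L)).
    - intros r [z [z' [Hz [Hz' [Hzn ->]]]]].
      assert (Hd' : 0 < dtheta th z z') by (rewrite dtheta_ne by auto; apply pow_lt; auto).
      apply Rmult_le_reg_r with (dtheta th z z'); auto. unfold Rdiv.
      rewrite Rmult_assoc, Rinv_l by lra. rewrite Rmult_1_r.
      eapply Rle_trans. apply HL; auto. apply Rmult_le_compat_r. lra. apply Rle_abs.
    - exists w, w'; auto. }
  apply Rmult_le_reg_r with (/ dtheta th w w'). apply Rinv_0_lt_compat; auto.
  rewrite Rmult_assoc, Rinv_r by lra. rewrite Rmult_1_r. exact Hr.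
Qed.

Fixpoint sumR (g : nat -> R) (k : nat) : R :=
  match k with O => 0 | S k' => sumR g k' + g k' end.

Lemma sum_n_sumR (g : nat -> R) k : sum_n g k = sumR g (S k).
Proof.
  induction k. rewrite sum_O. simpl. ring.
  rewrite sum_Sn. change (Rplus (sum_n g k) (g (S k)) = sumR g (S k) + g (S k)).
  rewrite IHk. reflexivity.
Qed.

Lemma sumR_mono g k j : (forall m, 0 <= g m) -> (k <= j)%nat -> sumR g k <= sumR g j.
Proof. intros H Hk. induction Hk. lra. simpl. specialize (H m). lra. Qed.

Fixpoint geo (r : R) (n : nat) : R := match n with O => 0 | S n' => geo r n' + r ^ n' end.

Lemma geo_bound r n : 0 <= r < 1 -> geo r n <= / (1 - r).
Proof.
  intros Hr. assert (E : geo r n * (1 - r) = 1 - r ^ n).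
  { induction n; simpl. ring. rewrite Rmult_plus_distr_r, IHn. ring. }
  assert (0 <= r ^ n) by (apply pow_le; lra).
  apply Rmult_le_reg_r with (1 - r). lra. rewrite E, Rinv_l; lra.
Qed.

Lemma summable N q : (N <> 0)%nat -> 0 <= q -> INR N * q < 1 ->
  ex_series (fun m => q ^ fst (dec N m)).
Proof.
  intros HN Hq HNq. set (a := fun m => q ^ fst (dec N m)).
  assert (Ha : forall m, 0 <= a m) by (intros; apply pow_le; auto).
  assert (Hblk : forall n, sumR a (T N n) = geo (INR N * q) n /\
     forall c, (c <= N ^ n)%nat -> sumR a (T N n + c) = geo (INR N * q) n + INR c * q ^ n).
  { assert (Hin : forall n, sumR a (T N n) = geo (INR N * q) n ->
       forall c, (c <= N ^ n)%nat -> sumR a (T N n + c) = geo (INR N * q) n + INR c * q ^ n).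
    { intros n H0 c; induction c; intros Hc. rewrite Nat.add_0_r, H0. simpl. ring.
      rewrite Nat.add_succ_r. cbn [sumR]. rewrite IHc by lia. unfold a. rewrite dec_spec by (auto; lia).
      simpl fst. rewrite S_INR. ring. }
    assert (Hb : forall n, sumR a (T N n) = geo (INR N * q) n).
    { induction n. reflexivity. rewrite T_S, Hin by (auto; lia). rewrite pow_INR. simpl.
      rewrite Rpow_mult_distr. ring. }
    intros n; split; auto. }
  assert (Hbd : forall k, sum_n a k <= / (1 - INR N * q)).
  { intros k. rewrite sum_n_sumR. eapply Rle_trans. apply sumR_mono with (j := T N (S k)); auto.
    apply T_ge; auto. destruct (Hblk (S k)) as [-> _]. apply geo_bound.
    split; auto. apply Rmult_le_pos; auto. apply pos_INR. }
  destruct (ex_finite_lim_seq_incr (sum_n a) (/ (1 - INR N * q))) as [l Hl].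
  - intros n. rewrite sum_Sn. change (sum_n a n <= sum_n a n + a (S n)). specialize (Ha (S n)). lra.
  - auto.
  - exists l. exact Hl.
Qed.

Lemma y_sup N th' m w : 0 < th' < 1 -> Cmod (yf N th' m w) <= 1.
Proof.
  intros Hth. unfold yf. rewrite Cmod_R. set (n := fst (dec N m)).
  assert (0 <= th' ^ n <= 1) by (split; [apply pow_le; lra| apply (pow_le_decr th' 0 n); lra || lia]).
  destruct (Nat.eqb _ _); rewrite Rabs_pos_eq; nra.
Qed.

Lemma y_lip N A th' m w w' : 0 < th' < 1 -> in_sigma N A w -> in_sigma N A w' ->
  Cmod (yf N th' m w - yf N th' m w') <= 1 * dtheta th' w w'.
Proof.
  intros Hth Hw Hw'. destruct (excluded_middle_informative (w = w')) as [->|Hne].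
  { rewrite dtheta_eq. replace (yf N th' m w' - yf N th' m w')%C with (RtoC 0) by ring. rewrite Cmod_0. lra. }
  unfold yf. set (n := fst (dec N m)). set (c := snd (dec N m)).
  destruct (Nat.eq_dec (code N n w) (code N n w')) as [E|E].
  - rewrite E. replace (_ - _)%C with (RtoC 0) by ring. rewrite Cmod_0.
    pose proof (dtheta_nonneg th' w w' ltac:(lra)). lra.
  - assert (Hfd : (first_diff w w' < n)%nat).
    { destruct (Nat.le_gt_cases n (first_diff w w')); auto. exfalso. apply E.
      apply code_agree. intros i Hi. apply (first_diff_spec w w' Hne). lia. }
    rewrite dtheta_ne by auto.
    assert (th' ^ n <= th' ^ first_diff w w') by (apply pow_le_decr; lia || lra).
    assert (0 <= th' ^ n) by (apply pow_le; lra).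
    rewrite <- RtoC_minus, Cmod_R.
    destruct (Nat.eqb_spec (code N n w) c), (Nat.eqb_spec (code N n w') c); try congruence;
    unfold Rabs; destruct (Rcase_abs _); nra.
Qed.

Lemma x_bound N A th m f : (N <> 0)%nat -> 0 < th < 1 -> in_F N A th f ->
  Cmod (xf N A th m f) <= / th * norm_theta N A th f.
Proof.
  intros HN Hth Hf. pose proof (norm_nonneg N A th f ltac:(lra)) as Hn0.
  pose proof (sup_nonneg N A f). pose proof (lip_nonneg N A th f ltac:(lra)).
  assert (Hi1 : 1 <= / th). { rewrite <- Rinv_1. apply Rinv_le_contravar; lra. }
  unfold xf, Dfun. set (n := fst (dec N m)). set (c := snd (dec N m)).
  destruct (excluded_middle_informative (nonempty N A n c)) as [Hne|Hne].
  2:{ rewrite Cmult_0_l, Cmod_0. apply Rmult_le_pos; lra. }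
  destruct (xpt_spec N A n c Hne) as [Ha Hca].
  set (a := xpt N A n c) in *.
  rewrite Cmod_mult, Cmod_R.
  assert (Hp : 0 < th ^ n) by (apply pow_lt; lra).
  rewrite Rabs_pos_eq by (left; apply Rinv_0_lt_compat; auto).
  unfold norm_theta in *. destruct n as [|n'].
  - simpl prevf. replace (f a - 0)%C with (f a) by ring.
    pose proof (sup_ge N A th f a Hf Ha). simpl. rewrite Rinv_1, Rmult_1_r. nra.
  - simpl prevf. set (b := xpt N A n' (c mod N ^ n')).
    assert (Hneb : nonempty N A n' (c mod N ^ n')).
    { exists a. split; auto. rewrite <- Hca. symmetry. apply code_mod; auto. intros; apply Ha. }
    destruct (xpt_spec N A n' _ Hneb) as [Hb Hcb]. fold b in Hb, Hcb.
    assert (Hag : forall i, (i < n')%nat -> a i = b i).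
    { apply (code_inj N n'); try (intros; apply Ha); try (intros; apply Hb).
      rewrite Hcb, <- Hca. symmetry. apply code_mod; auto. intros; apply Ha. }
    pose proof (lip_ge N A th f a b ltac:(lra) Hf Ha Hb) as H1.
    pose proof (dtheta_le th a b n' Hth Hag) as H2.
    assert (H3 : Cmod (f a - f b) <= lip_const N A th f * th ^ n').
    { eapply Rle_trans. apply H1. apply Rmult_le_compat_l; auto. }
    assert (E : / th ^ S n' = / th * / th ^ n').
    { simpl. rewrite Rinv_mult. auto. }
    rewrite E. assert (Hp' : 0 < th ^ n') by (apply pow_lt; lra).
    assert (Cmod (f a - f b) * / th ^ n' <= lip_const N A th f).
    { apply Rmult_le_reg_r with (th ^ n'); auto. rewrite Rmult_assoc, Rinv_l by lra. lra. }
    assert (0 < / th) by (apply Rinv_0_lt_compat; lra).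
    assert (HH : Cmod (f a - f b) * (/ th * / th ^ n') = / th * (Cmod (f a - f b) * / th ^ n')) by ring.
    rewrite HH. apply Rmult_le_compat_l; lra.
Qed.

Lemma x_add N A th m f g :
  xf N A th m (fun w => f w + g w)%C = (xf N A th m f + xf N A th m g)%C.
Proof.
  unfold xf, Dfun, prevf. destruct (excluded_middle_informative _); destruct (fst (dec N m)); ring.
Qed.

Lemma x_scal N A th m (k : C) f :
  xf N A th m (fun w => k * f w)%C = (k * xf N A th m f)%C.
Proof.
  unfold xf, Dfun, prevf. destruct (excluded_middle_informative _); destruct (fst (dec N m)); ring.
Qed.

Theorem lemmaB3 (N : nat) (A : nat -> nat -> bool) (theta theta' : R) :
  aperiodic N A ->
  0 < theta < 1 -> 0 < theta' < 1 ->
  theta < theta' / INR N ->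
  embedding_nuclear N A theta theta'.
Proof.
  intros _ [Hth0 Hth1] [Ht0 Ht1] Hlt.
  assert (HN : N <> 0%nat).
  { intros ->. simpl in Hlt. unfold Rdiv in Hlt. rewrite Rinv_0, Rmult_0_r in Hlt. lra. }
  assert (HN1 : 1 <= INR N) by (apply (le_INR 1); lia).
  assert (HNt : theta * INR N < theta').
  { apply Rmult_lt_compat_r with (r := INR N) in Hlt; [|lra].
    unfold Rdiv in Hlt. rewrite Rmult_assoc, Rinv_l in Hlt; lra. }
  assert (Htt : theta < theta') by nra.
  set (q := theta / theta').
  assert (Hq : 0 < q < 1). { unfold q. split. apply Rdiv_lt_0_compat; lra.
    apply Rmult_lt_reg_r with theta'. lra. unfold Rdiv. rewrite Rmult_assoc, Rinv_l; lra. }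
  assert (HNq : INR N * q < 1).
  { unfold q. apply Rmult_lt_reg_r with theta'. lra. unfold Rdiv.
    rewrite Rmult_assoc, Rmult_assoc, Rinv_l; lra. }
  assert (Hthq : theta <= q).
  { unfold q. apply Rmult_le_reg_r with theta'. lra. unfold Rdiv.
    rewrite Rmult_assoc, Rinv_l; nra. }
  exists (lamf N theta theta'), (xf N A theta), (yf N theta').
  split; [|split; [|split; [|split; [|split; [|split]]]]].
  - apply ex_series_ext with (a := fun m => q ^ fst (dec N m)).
    + intros m. unfold lamf. rewrite Cmod_R, Rabs_pos_eq; auto. apply pow_le; apply Rlt_le, Rdiv_lt_0_compat; lra.
    + apply summable; auto; lra.
  - intros; apply x_add.
  - intros; apply x_scal.
  - exists (/ theta). intros; apply x_bound; auto.
  - intros n. split.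
    + exists 1. intros; apply y_sup; auto.
    + exists 1. intros; apply (y_lip N A); auto.
  - exists (1 + 1). intros n. apply norm_upper; try lra.
    + intros; apply y_sup; auto.
    + intros; apply (y_lip N A); auto.
  - intros f Hf. destruct Hf as [_ [L HL]].
    set (L0 := Rabs L).
    assert (HL0 : 0 <= L0) by apply Rabs_pos.
    assert (HLL : forall w w', in_sigma N A w -> in_sigma N A w' ->
      Cmod (f w - f w') <= L0 * dtheta theta w w').
    { intros w w' Hw Hw'. eapply Rle_trans. apply HL; auto. apply Rmult_le_compat_r.
      apply dtheta_nonneg; lra. apply Rle_abs. }
    apply is_lim_seq_spec. intros eps.
    assert (Hy : 0 < eps / (3 * L0 + 1)).
    { apply Rdiv_lt_0_compat. apply cond_pos. lra. }
    destruct (pow_lt_1_zero q ltac:(rewrite Rabs_pos_eq; lra) _ Hy) as [n0 Hn0].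
    exists (T N (S n0)). intros k Hk.
    destruct (partial_form N A theta theta' f k HN Hth0 Ht0) as [n' [c [Hc [Hkl Hform]]]].
    assert (Hn' : (n0 <= n')%nat).
    { destruct (Nat.le_gt_cases n0 n'); auto. pose proof (T_mono N (S (S n')) (S n0) ltac:(lia)). lia. }
    assert (Hnb : norm_theta N A theta'
        (fun w => f w - sum_n (fun n => lamf N theta theta' n * xf N A theta n f * yf N theta' n w) k)%C
        <= L0 * theta ^ n' + 2 * L0 * q ^ n').
    { apply norm_upper; try lra.
      - apply Rmult_le_pos; auto. apply pow_le; lra.
      - apply Rmult_le_pos; try nra. apply pow_le; lra.
      - intros w Hw. specialize (Hform w Hw). unfold term in Hform. rewrite Hform.
        apply (gsup N A theta f L0 n' c w); auto.
      - intros w w' Hw Hw' Hne. pose proof (Hform w Hw) as F1. pose proof (Hform w' Hw') as F2.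
        unfold term in F1, F2. rewrite F1, F2.
        apply (glip N A theta theta' f L0 n' c w w'); auto. }
    pose proof (norm_nonneg N A theta'
        (fun w => f w - sum_n (fun n => lamf N theta theta' n * xf N A theta n f * yf N theta' n w) k)%C Ht0).
    specialize (Hn0 n' Hn'). rewrite Rabs_pos_eq in Hn0 by (apply pow_le; lra).
    assert (theta ^ n' <= q ^ n') by (apply pow_incr; lra).
    rewrite Rminus_0_r, Rabs_pos_eq by auto.
    assert (Hq' : 0 <= q ^ n') by (apply pow_le; lra).
    assert (Hlt2 : (3 * L0 + 1) * q ^ n' < eps).
    { apply Rmult_lt_compat_l with (r := 3 * L0 + 1) in Hn0; [|lra].
      unfold Rdiv in Hn0. rewrite <- Rmult_assoc, (Rmult_comm _ (pos eps)), Rmult_assoc, Rinv_r in Hn0; lra. }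
    nra.
Qed.
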